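(* Under Assumption 1, let $(x_t,y_t)$ be generated by SBFW with step sizes satisfying $\delta_t\le\min\{\frac{2}{3\mu_g},\frac{\mu_g}{2(1+\sigma_g^2)L_g^2}\}$ and $\eta_t\in[0,1]$. Then for all $t\ge2$, $$\mathbb E_t\|y_t-y^*(x_t)\|^2\le\Big(1-\frac{\delta_t\mu_g}{2}\Big)\|y_{t-1}-y^*(x_{t-1})\|^2+\frac{2\eta_{t-1}^2}{\delta_t\mu_g}\Big(\frac{C_{xy}}{\mu_g}\Big)^2D^2+4\delta_t^2\sigma_g^2.$$
   Context: Setting. $\mathcal X\subset\mathbb R^m$ is nonempty, convex and compact, with diameter $D=\max_{x,x'\in\mathcal X}\|x-x'\|$. $\theta,\xi$ are independent random variables; $f(x,y;\theta)$ and $g(x,y;\xi)$ map $\mathbb R^m\times\mathbb R^n\to\mathbb R$, with $g(\cdot,\cdot;\xi)$ twice continuously differentiable. Put $F(x,y)=\mathbb E_\theta f(x,y;\theta)$ and $G(x,y)=\mathbb E_\xi g(x,y;\xi)$; derivatives of $F,G$ are expectations of those of $f,g$. Let $y^*(x)=\arg\min_{y\in\mathbb R^n}G(x,y)$. Assumption 1. (i) $\mathbb E\|\nabla_xF(x,y)-\nabla_xf(x,y;\theta)\|^2\le\sigma_x^2$, $\mathbb E\|\nabla_yF(x,y)-\nabla_yf(x,y;\theta)\|^2\le\sigma_y^2$, $\mathbb E\|\nabla^2_{xy}G(x,y)-\nabla^2_{xy}g(x,y;\xi)\|^2\le\sigma_{xy}^2$, $\mathbb E\|\nabla_yG(x,y)-\nabla_yg(x,y;\xi)\|^2\le\sigma_g^2$.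 (ii) For each $x\in\mathcal X$, the maps $y\mapsto\nabla_xF,\nabla_yF,\nabla_yG,\nabla^2_{xy}G,\nabla^2_{yy}G$ are Lipschitz with constants $L_{f_x},L_{f_y},L_g,L_{g_{xy}},L_{g_{yy}}$ respectively. (iii) For each $y$, the maps $x\mapsto\nabla_yF,\nabla^2_{xy}G,\nabla^2_{yy}G$ are Lipschitz with constants $L_{f_y},L_{g_{xy}},L_{g_{yy}}$. (iv) For all $x\in\mathcal X$, $y\in\mathbb R^n$: $\mathbb E\|\nabla_yf(x,y;\theta)\|\le C_y$, $\mathbb E\|\nabla^2_{xy}g(x,y;\xi)\|\le C_{xy}$. (v) $G(x,\cdot)$ is $\mu_g$-strongly convex for every $x\in\mathcal X$. Algorithm SBFW (relevant part). Fresh samples $\xi_t$ are drawn at iteration $t$ independently of the past. $x_1\in\mathcal X$, $y_1\in\mathbb R^n$; for $t\ge2$, $y_t=y_{t-1}-\delta_t\nabla_yg(x_{t-1},y_{t-1};\xi_t)$; for $t\ge1$, $d_t$ is some $\mathbb R^m$-valued direction, $s_t\in\arg\min_{s\in\mathcal X}\langle s,d_t\rangle$ and $x_{t+1}=(1-\eta_t)x_t+\eta_ts_t$ (so $x_t\in\mathcal X$). $\mathcal F_t$ is the σ-field of all randomness drawn before iteration $t$'s fresh samples (so $x_{t-1},y_{t-1},x_t$ are $\mathcal F_t$-measurable), and $\mathbb E_t=\mathbb E[\cdot\mid\mathcal F_t]$. *)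

(* Defs.v *)
From HB Require Import structures.
From mathcomp Require Import all_boot all_order all_algebra.
From mathcomp Require Import all_classical all_reals all_analysis.
Set Implicit Arguments. Unset Strict Implicit. Unset Printing Implicit Defensive.
Import Order.TTheory GRing.Theory Num.Theory.
Import numFieldNormedType.Exports.
Local Open Scope classical_set_scope.
Local Open Scope ring_scope.

Section Defs.
Context {R : realType}.

Definition dotv {k : nat} (u v : 'rV[R]_k) : R := \sum_(i < k) u 0 i * v 0 i.
Definition enorm {k : nat} (v : 'rV[R]_k) : R := Num.sqrt (dotv v v).

Definition opnorm {p q : nat} (A : 'M[R]_(p, q)) : R :=
  sup [set enorm (u *m A) | u in [set u : 'rV[R]_p | enorm u <= 1]].

Definition convex_setv {k : nat} (X : set 'rV[R]_k) : Prop :=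
  forall a b (l : R), X a -> X b -> 0 <= l <= 1 -> X ((1 - l) *: a + l *: b).

Definition is_diameter {k : nat} (X : set 'rV[R]_k) (D : R) : Prop :=
  (forall a b, X a -> X b -> enorm (a - b) <= D) /\
  (exists a b, X a /\ X b /\ enorm (a - b) = D).

Definition ex_dir {m n : nat} (i : 'I_m) : 'rV[R]_m * 'rV[R]_n := (delta_mx 0 i, 0).
Definition ey_dir {m n : nat} (j : 'I_n) : 'rV[R]_m * 'rV[R]_n := (0, delta_mx 0 j).

Definition grad_x {m n : nat} (h : 'rV[R]_m * 'rV[R]_n -> R) p : 'rV[R]_m :=
  \row_i derive h p (@ex_dir m n i).
Definition grad_y {m n : nat} (h : 'rV[R]_m * 'rV[R]_n -> R) p : 'rV[R]_n :=
  \row_j derive h p (@ey_dir m n j).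
Definition hess_xy {m n : nat} (h : 'rV[R]_m * 'rV[R]_n -> R) p : 'M[R]_(m, n) :=
  \matrix_(i, j) derive (fun q => derive h q (@ey_dir m n j)) p (@ex_dir m n i).
Definition hess_yy {m n : nat} (h : 'rV[R]_m * 'rV[R]_n -> R) p : 'M[R]_(n, n) :=
  \matrix_(i, j) derive (fun q => derive h q (@ey_dir m n j)) p (@ey_dir m n i).

Definition C2 {V : normedModType R} (h : V -> R) : Prop :=
  (forall p, differentiable h p) /\
  (forall v p, differentiable (fun q => derive h q v) p) /\
  (forall v w, continuous (fun q => derive (fun q' => derive h q' v) q w)).

Definition Ex {d} {T : measurableType d} (P : probability T R) (Y : T -> R) : R :=
  fine (\int[P]_w (Y w)%:E)%E.

End Defs.

(* Main.v *)
Require Import Defs.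
From HB Require Import structures.
From mathcomp Require Import all_boot all_order all_algebra.
From mathcomp Require Import all_classical all_reals all_analysis.
From mathcomp Require Import ring lra.
Import Order.TTheory GRing.Theory Num.Theory.
Import numFieldNormedType.Exports.
Local Open Scope classical_set_scope.
Local Open Scope ring_scope.
Set Implicit Arguments. Unset Strict Implicit.

Section Vec.
Variable R : realType.
Variable k : nat.
Implicit Types u v w : 'rV[R]_k.

Lemma dotvC u v : dotv u v = dotv v u.
Proof. by apply: eq_bigr => i _; rewrite mulrC. Qed.

Lemma dotvDl u v w : dotv (u + v) w = dotv u w + dotv v w.
Proof. by rewrite /dotv -big_split; apply: eq_bigr => i _; rewrite mxE mulrDl. Qed.

Lemma dotvZl (c : R) u w : dotv (c *: u) w = c * dotv u w.
Proof. by rewrite /dotv mulr_sumr; apply: eq_bigr => i _; rewrite mxE mulrA. Qed.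

Lemma dotvNl u w : dotv (- u) w = - dotv u w.
Proof. by rewrite -scaleN1r dotvZl mulN1r. Qed.

Lemma dotvBl u v w : dotv (u - v) w = dotv u w - dotv v w.
Proof. by rewrite dotvDl dotvNl. Qed.

Lemma dotvDr u v w : dotv w (u + v) = dotv w u + dotv w v.
Proof. by rewrite dotvC dotvDl !(dotvC w). Qed.

Lemma dotvZr (c : R) u w : dotv w (c *: u) = c * dotv w u.
Proof. by rewrite dotvC dotvZl dotvC. Qed.

Lemma dotvBr u v w : dotv w (u - v) = dotv w u - dotv w v.
Proof. by rewrite dotvC dotvBl !(dotvC w). Qed.

Lemma dotv0l w : dotv 0 w = 0.
Proof. by rewrite /dotv big1 // => i _; rewrite mxE mul0r. Qed.

Lemma dotvv_ge0 v : 0 <= dotv v v.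
Proof. by apply: sumr_ge0 => i _; rewrite -expr2 sqr_ge0. Qed.

Lemma enorm_ge0 v : 0 <= enorm v.
Proof. exact: sqrtr_ge0. Qed.

Lemma enorm_sq v : enorm v ^+ 2 = dotv v v.
Proof. by rewrite sqr_sqrtr // dotvv_ge0. Qed.

Lemma enormZ (c : R) v : enorm (c *: v) = `|c| * enorm v.
Proof.
by rewrite /enorm dotvZl dotvZr mulrA sqrtrM ?sqr_ge0 // -expr2 sqrtr_sqr.
Qed.

Lemma enormN v : enorm (- v) = enorm v.
Proof. by rewrite -scaleN1r enormZ normrN normr1 mul1r. Qed.

Lemma enorm_eq0 v : enorm v = 0 -> v = 0.
Proof.
move=> h; have : dotv v v = 0 by rewrite -enorm_sq h expr0n.
move=> /eqP; rewrite psumr_eq0; last by move=> i _; rewrite -expr2 sqr_ge0.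
move=> /allP H; apply/rowP => j; rewrite mxE.
have := H j (mem_index_enum j); rewrite -expr2 sqrf_eq0 => /eqP ->//.
Qed.

Lemma CS u v : dotv u v <= enorm u * enorm v.
Proof.
set A := dotv u u; set B := dotv u v; set C := dotv v v.
have Q t : 0 <= A - 2 * t * B + t ^+ 2 * C.
  have := dotvv_ge0 (u - t *: v).
  by rewrite dotvBl !dotvBr !dotvZl !dotvZr (dotvC v u) -/A -/B -/C; nra.
have BC : B ^+ 2 <= A * C.
  have [C0|C0] := ltrP 0 C.
    have := Q (B / C); move=> h.
    have e : A - 2 * (B / C) * B + (B / C) ^+ 2 * C = (A * C - B ^+ 2) / C.
      by field; rewrite gt_eqF.
    by move: h; rewrite e pmulr_lge0 ?invr_gt0 // subr_ge0.
  have C00 : C = 0 by apply/eqP; rewrite eq_le C0 dotvv_ge0.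
  have B0 : B = 0.
    apply/eqP; apply/negP => /negP B0.
    have := Q ((A + 1) / (2 * B)); rewrite C00 mulr0 addr0.
    have -> : 2 * ((A + 1) / (2 * B)) * B = A + 1 by field.
    lra.
  by rewrite B0 C00 expr0n mulr0.
have [B0|B0] := lerP B 0.
  by apply: le_trans B0 _; rewrite mulr_ge0 // enorm_ge0.
rewrite -(ger0_norm (ltW B0)) -sqrtr_sqr /enorm -sqrtrM ?dotvv_ge0 //.
by rewrite ler_sqrt // mulr_ge0 // dotvv_ge0.
Qed.

Lemma young u v (s : R) : 0 < s ->
  enorm (u + v) ^+ 2 <= (1 + s) * enorm u ^+ 2 + (1 + s^-1) * enorm v ^+ 2.
Proof.
move=> s0; rewrite !enorm_sq dotvDl !dotvDr (dotvC v u).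
have := dotvv_ge0 (s *: u - v).
rewrite dotvBl !dotvBr !dotvZl !dotvZr (dotvC v u) => h.
have h2 : 2 * dotv u v <= s * dotv u u + s^-1 * dotv v v.
  have e : s * dotv u u + s^-1 * dotv v v - 2 * dotv u v
     = s^-1 * (s * (s * dotv u u) - s * dotv u v - (s * dotv u v - dotv v v)).
    by field; rewrite gt_eqF.
  rewrite -subr_ge0 e mulr_ge0 // invr_ge0 ltW //.
lra.
Qed.

End Vec.

Section Op.
Variable R : realType.
Variables p q : nat.

Lemma CSabs k (u v : 'rV[R]_k) : `|dotv u v| <= enorm u * enorm v.
Proof.
have [h|h] := ler0P (dotv u v).
  by rewrite -dotvNl -(enormN u) CS.
exact: CS.
Qed.

Lemma mulmx_dot (u : 'rV[R]_p) (A : 'M[R]_(p, q)) j :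
  (u *m A) 0 j = dotv u (\row_i A i j).
Proof. by rewrite mxE; apply: eq_bigr => i _; rewrite mxE. Qed.

Lemma opnorm_ub (A : 'M[R]_(p, q)) (u : 'rV[R]_p) :
  enorm u <= 1 -> enorm (u *m A) <= opnorm A.
Proof.
move=> hu; apply: (@ub_le_sup _ [set enorm (u *m A) | u in [set u : 'rV[R]_p | enorm u <= 1]]); last by exists u.
exists (Num.sqrt (\sum_j dotv (\row_i A i j) (\row_i A i j))).
move=> _ [v /= hv <-]; rewrite /enorm ler_sqrt; last first.
  by apply: sumr_ge0 => j _; exact: dotvv_ge0.
apply: ler_sum => j _; rewrite mulmx_dot -expr2.
have h := CSabs v (\row_i A i j).
have : `|dotv v (\row_i A i j)| ^+ 2 <= (enorm (\row_i A i j)) ^+ 2.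
  rewrite lerXn2r ?nnegrE ?normr_ge0 ?enorm_ge0 //.
  apply: le_trans h _; rewrite ler_piMl ?enorm_ge0 //.
by rewrite real_normK ?num_real // enorm_sq.
Qed.

Lemma opnorm_ge0 (A : 'M[R]_(p, q)) : 0 <= opnorm A.
Proof.
apply: le_trans (@opnorm_ub A 0 _); first exact: enorm_ge0.
by rewrite /enorm dotv0l sqrtr0.
Qed.

Lemma opnorm_mul (A : 'M[R]_(p, q)) (u : 'rV[R]_p) :
  enorm (u *m A) <= opnorm A * enorm u.
Proof.
have [u0|u0] := eqVneq (enorm u) 0.
  by rewrite u0 (enorm_eq0 u0) mul0mx mulr0 /enorm dotv0l sqrtr0.
have up : 0 < enorm u by rewrite lt_def u0 enorm_ge0.
have := @opnorm_ub A ((enorm u)^-1 *: u) _.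
rewrite -scalemxAl !enormZ ger0_norm ?invr_ge0 ?enorm_ge0 //.
rewrite mulVf // lexx => /(_ isT).
move=> h; have := ler_wpM2l (ltW up) h.
by rewrite mulrA mulfV ?mul1r // mulrC.
Qed.

End Op.

Section Int.
Variable R : realType.
Variable d : measure_display.
Variable T : measurableType d.
Variable P : probability T R.

Definition Int (f : T -> R) := P.-integrable setT (fun x => (f x)%:E).

Lemma Ex_int f : Int f -> (\int[P]_x (f x)%:E = (Ex P f)%:E)%E.
Proof. by move=> h; rewrite /Ex fineK // integrable_fin_num. Qed.

Lemma IntD f g : Int f -> Int g -> Int (fun x => f x + g x).
Proof. by move=> hf hg; exact: (integrableD _ hf hg). Qed.

Lemma IntZ c f : Int f -> Int (fun x => c * f x).
Proof. by move=> hf; exact: (integrableZl _ _ hf). Qed.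

Lemma IntN f : Int f -> Int (fun x => - f x).
Proof.
move=> hf; rewrite /Int (_ : (fun x => _) = (-%E \o (fun x => (f x)%:E))) //.
exact: integrableN.
Qed.

Lemma IntB f g : Int f -> Int g -> Int (fun x => f x - g x).
Proof. by move=> hf hg; apply: IntD => //; exact: IntN. Qed.

Lemma Intcst c : Int (fun _ => c).
Proof.
apply/integrableP; split; first exact: measurable_cst.
rewrite (_ : (fun _ => _) = cst `|c%:E|%E) // integral_cst //.
rewrite [X in (_ * X)%E](_ : _ = 1%E); last exact: probability_setT.
by rewrite mule1 ltry.
Qed.

Lemma Int_sum n (F : 'I_n -> T -> R) : (forall i, Int (F i)) ->
  Int (fun x => \sum_(i < n) F i x).
Proof.
move=> h; rewrite /Int (_ : (fun x => _) = (fun x => \sum_(i < n) (F i x)%:E)%E).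
  by apply: integrable_sum => // i _; exact: h.
by apply/funext => x; rewrite sumEFin.
Qed.

Lemma ExD f g : Int f -> Int g -> Ex P (fun x => f x + g x) = Ex P f + Ex P g.
Proof.
move=> hf hg; apply/EFin_inj; rewrite -Ex_int; last exact: IntD.
by rewrite EFinD -!Ex_int // -integralD.
Qed.

Lemma ExZ c f : Int f -> Ex P (fun x => c * f x) = c * Ex P f.
Proof.
move=> hf; apply/EFin_inj; rewrite -Ex_int; last exact: IntZ.
by rewrite EFinM -Ex_int // -integralZl.
Qed.

Lemma Excst c : Ex P (fun _ => c) = c.
Proof.
apply/EFin_inj; rewrite -Ex_int; last exact: Intcst.
rewrite (_ : (fun _ => _) = cst c%:E) // integral_cst //.
rewrite [X in (_ * X)%E](_ : _ = 1%E); last exact: probability_setT.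
by rewrite mule1.
Qed.

Lemma Ex_sum n (F : 'I_n -> T -> R) : (forall i, Int (F i)) ->
  Ex P (fun x => \sum_(i < n) F i x) = \sum_(i < n) Ex P (F i).
Proof.
move=> h; apply/EFin_inj; rewrite -Ex_int; last exact: Int_sum.
rewrite -sumEFin.
under eq_integral do rewrite -sumEFin.
by rewrite integral_sum //; apply: eq_bigr => i _; exact: Ex_int.
Qed.

Lemma ExB f g : Int f -> Int g -> Ex P (fun x => f x - g x) = Ex P f - Ex P g.
Proof.
move=> hf hg; rewrite ExD //; last exact: IntN.
have := ExZ (-1) hg; rewrite mulN1r => <-.
by congr (_ + Ex P _); apply/funext => x; rewrite mulN1r.
Qed.

Lemma Ex_le f g : Int f -> Int g -> (forall x, f x <= g x) -> Ex P f <= Ex P g.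
Proof.
move=> hf hg h; rewrite -lee_fin -!Ex_int //.
by apply: le_integral => // x _; rewrite lee_fin.
Qed.

Lemma int_mono_ge0 (f g : T -> \bar R) : (forall x, 0 <= f x)%E ->
  (forall x, f x <= g x)%E ->
  (\int[P]_x f x <= \int[P]_x g x)%E.
Proof.
move=> f0 fg; have g0 : forall x, (0 <= g x)%E by move=> x; exact: le_trans (fg x).
rewrite !ge0_integralE //; apply: le_ereal_sup => _ [h /= hh <-].
exists h => //= x; apply: le_trans (hh x) _.
by rewrite /patch; case: ifP.
Qed.

End Int.

Section Calc.
Variable R : realType.
Variables m n : nat.
Local Notation V := ('rV[R]_m * 'rV[R]_n)%type.

Lemma sum_fst k (F : 'I_k -> V) : (\sum_(i < k) F i).1 = \sum_(i < k) (F i).1.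
Proof. by apply: (big_morph fst) => //. Qed.

Lemma sum_snd k (F : 'I_k -> V) : (\sum_(i < k) F i).2 = \sum_(i < k) (F i).2.
Proof. by apply: (big_morph snd) => //. Qed.

Lemma dir_decomp (u : 'rV[R]_m) (w : 'rV[R]_n) :
  (u, w) = \sum_(i < m) u 0 i *: (@ex_dir R m n i)
         + \sum_(j < n) w 0 j *: (@ey_dir R m n j).
Proof.
apply/pair_equal_spec; split.
  rewrite /= sum_fst sum_fst /=.
  rewrite (@big1 _ _ _ _ _ _ (fun j => (w 0 j *: ey_dir j).1)) ?addr0; last first.
    by move=> j _; rewrite /= scaler0.
  by rewrite {1}(row_sum_delta u).
rewrite /= sum_snd sum_snd /=.
rewrite (@big1 _ _ _ _ _ _ (fun i => (u 0 i *: ex_dir i).2)) ?add0r; last first.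
  by move=> i _; rewrite /= scaler0.
by rewrite {1}(row_sum_delta w).
Qed.

Lemma derive_lin (F : V -> R) p (u : 'rV[R]_m) (w : 'rV[R]_n) :
  differentiable F p ->
  derive F p (u, w) = dotv (grad_x F p) u + dotv (grad_y F p) w.
Proof.
move=> dF; rewrite deriveE // dir_decomp linearD !linear_sum /=.
congr (_ + _); apply: eq_bigr => i _; rewrite linearZ /= -deriveE // mxE;
  by rewrite mulrC.
Qed.

End Calc.

Section SC.
Variable R : realType.
Variables m n : nat.
Local Notation V := ('rV[R]_m * 'rV[R]_n)%type.

Lemma le_eps (a b : R) : (forall e, 0 < e -> a <= b + e) -> a <= b.
Proof.
move=> h; rewrite leNgt; apply/negP => ba.
have e0 : 0 < (a - b) / 2 by rewrite divr_gt0 // subr_gt0.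
have := h _ e0; lra.
Qed.

Lemma lim_right_le (f : R -> R) (K : R) :
  cvg (f x @[x --> 0^']) ->
  (forall h0, 0 < h0 -> \forall h \near 0^'+, f h <= K + h0) ->
  lim (f x @[x --> 0^']) <= K.
Proof.
move=> cvfx hb.
have H : f x @[x --> 0^'+] --> lim (f x @[x --> 0^']).
  move=> A /cvfx /nbhs_ballP [_ /posnumP[e] xe_A].
  by exists e%:num => //= y xe_y /gt_eqF/negbT/xe_A; exact.
apply: le_eps => e e0.
have <- : lim (f x @[x --> 0^'+]) = lim (f x @[x --> 0^']).
  by apply: cvg_lim => //.
apply: limr_le; first by apply/cvg_ex; eexists; exact: H.
exact: hb.
Qed.

End SC.

Section SC2.
Variable R : realType.
Variables m n : nat.
Local Notation V := ('rV[R]_m * 'rV[R]_n)%type.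

Lemma sc_half (G : V -> R) x (a b : 'rV[R]_n) mu :
  differentiable G (x, a) -> 0 <= mu ->
  (forall l, 0 <= l <= 1 -> G (x, (1 - l) *: a + l *: b) <=
     (1 - l) * G (x, a) + l * G (x, b) - mu / 2 * l * (1 - l) * enorm (a - b) ^+ 2) ->
  dotv (grad_y G (x, a)) (b - a) <= G (x, b) - G (x, a) - mu / 2 * enorm (a - b) ^+ 2.
Proof.
move=> dG mu0 hc.
have := derive_lin 0 (b - a) dG; rewrite dotvC dotv0l add0r => <-.
rewrite /derive; apply: lim_right_le; first exact: (diff_derivable (v := (0, b - a)) dG).
move=> h0 h00.
set N := enorm (a - b) ^+ 2.
have N0 : 0 <= N by rewrite /N sqr_ge0.
set eps := Num.min 1 (h0 / (mu / 2 * N + 1)).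
have eps0 : 0 < eps.
  by rewrite lt_min ltr01 /= divr_gt0 // ltr_wpDl // mulr_ge0 // divr_ge0.
exists eps => //= y; rewrite /ball /= sub0r normrN => hy y0.
rewrite gtr0_norm // lt_min in hy; case/andP: hy => y1 hy.
have yh : y * (mu / 2 * N) <= h0.
  have hd : 0 < mu / 2 * N + 1 by rewrite ltr_wpDl // mulr_ge0 // divr_ge0.
  move: hy; rewrite ltr_pdivlMr // => hy.
  have yN : 0 <= mu / 2 * N by rewrite mulr_ge0 // divr_ge0.
  by nra.
have e1 : y *: ((0 : 'rV[R]_m), b - a) + (x, a) = (x, (1 - y) *: a + y *: b).
  have -> : y *: ((0 : 'rV[R]_m), b - a) + (x, a) = (y *: 0 + x, y *: (b - a) + a) by [].
  apply/pair_equal_spec; split; first by rewrite scaler0 add0r.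
  by rewrite scalerBr scalerBl scale1r addrC addrA addrAC.
rewrite /comp /shift /= e1.
have := hc y; rewrite ltW // ltW //= -/N => /(_ isT) hcy.
rewrite -[X in X <= _]/(y^-1 * (G (x, (1 - y) *: a + y *: b) - G (x, a))).
have yy := ler_wpM2l (ltW y0) yh.
have key : G (x, (1 - y) *: a + y *: b) - G (x, a) <=
    y * (G (x, b) - G (x, a) - mu / 2 * N + h0) by nra.
have yi : 0 <= y^-1 by rewrite invr_ge0 ltW.
apply: le_trans (ler_wpM2l yi key) _.
by rewrite mulrA mulVf ?gt_eqF // mul1r.
Qed.

End SC2.

Section MV.
Variable R : realType.
Variables m n : nat.
Local Notation V := ('rV[R]_m * 'rV[R]_n)%type.

Lemma is_derive_line (F : V -> R) (p v : V) (t : R) :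
  differentiable F (p + t *: v) ->
  is_derive t 1 (fun s : R => F (p + s *: v)) (derive F (p + t *: v) v).
Proof.
move=> dF.
have E : (fun h : R => h^-1 *: (((fun s : R => F (p + s *: v)) \o shift t) (h *: 1)
             - F (p + t *: v))) =
         (fun h : R => h^-1 *: ((F \o shift (p + t *: v)) (h *: v) - F (p + t *: v))).
  apply/funext => h; rewrite /comp /shift /=.
  congr (_ *: (F _ - _)).
  by rewrite [h *: 1]/GRing.scale /= mulr1 scalerDl addrCA addrA.
split.
  by rewrite /derivable E; exact: diff_derivable.
by rewrite /derive E.
Qed.

End MV.

Section MV2.
Variable R : realType.
Variables m n : nat.
Local Notation V := ('rV[R]_m * 'rV[R]_n)%type.

Lemma grad_diff_bound (G : V -> R) (x x' : 'rV[R]_m) (a w : 'rV[R]_n) (K : R) :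
  (forall q j, differentiable (fun q' => derive G q' (@ey_dir R m n j)) q) ->
  (forall c, 0 < c < 1 ->
     dotv ((x' - x) *m hess_xy G (x + c *: (x' - x), a)) w <= K) ->
  dotv (grad_y G (x', a) - grad_y G (x, a)) w <= K.
Proof.
move=> dD hK.
set u := x' - x.
pose D j := fun q => derive G q (@ey_dir R m n j).
pose psi j := fun s : R => D j ((x, a) + s *: (u, (0 : 'rV[R]_n))).
pose phi := fun s : R => \sum_(j < n) w 0 j * psi j s.
have dphi : forall s : R, is_derive s (1 : R) phi
    (\sum_(j < n) w 0 j * derive (D j) ((x, a) + s *: (u, (0 : 'rV[R]_n))) (u, 0)).
  move=> s.
  rewrite (_ : phi = \sum_(j < n) (w 0 j \*: psi j)); last first.
    by apply/funext => t; rewrite fct_sumE.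
  apply: is_derive_sum => j.
  have h := @is_derive_line _ _ _ (D j) (x, a) (u, 0) s (dD _ j).
  exact: (is_deriveZ (w 0 j) h).
have cont : {within `[0, 1], continuous phi}.
  apply: continuous_subspaceT => s; apply: differentiable_continuous.
  by apply/derivable1_diffP; case: (dphi s).
have [c c01 Hc] := MVT ltr01 (fun s _ => dphi s) cont.
have Ep s : (x, a) + s *: (u, (0 : 'rV[R]_n)) = (x + s *: u, a).
  by apply/pair_equal_spec; split => //=; rewrite scaler0 addr0.
have phiE s : phi s = dotv (grad_y G (x + s *: u, a)) w.
  rewrite /phi /dotv; apply: eq_bigr => j _.
  by rewrite /psi Ep mxE mulrC.
rewrite dotvBl.
have -> : x' = x + 1 *: u by rewrite scale1r /u addrC subrK.
have {2}-> : x = x + 0 *: u by rewrite scale0r addr0.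
rewrite -!phiE Hc subr0 mulr1.
move: c01; rewrite in_itv /= => c01.
apply: le_trans (hK c c01); rewrite le_eqVlt; apply/orP; left; apply/eqP.
rewrite /dotv; apply: eq_bigr => j _.
rewrite derive_lin; last exact: dD.
rewrite (dotvC (grad_y (D j) _)) dotv0l addr0 mxE mulrC mulr_suml; idtac.
rewrite /dotv mulr_suml; apply: eq_bigr => i _.
by rewrite !mxE Ep [X in X * _]mulrC.
Qed.

End MV2.

Section SC3.
Variable R : realType.
Variables m n : nat.
Local Notation V := ('rV[R]_m * 'rV[R]_n)%type.

Definition HC (G : V -> R) (x : 'rV[R]_m) (mu : R) := forall (a b : 'rV[R]_n) l,
  0 <= l <= 1 -> G (x, (1 - l) *: a + l *: b) <=
     (1 - l) * G (x, a) + l * G (x, b) - mu / 2 * l * (1 - l) * enorm (a - b) ^+ 2.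

Lemma enormB_sym (a b : 'rV[R]_n) : enorm (a - b) = enorm (b - a).
Proof. by rewrite -enormN opprB. Qed.

Lemma sc_mono G x a b mu : differentiable G (x, a) -> differentiable G (x, b) ->
  0 <= mu -> HC G x mu ->
  mu * enorm (a - b) ^+ 2 <= dotv (grad_y G (x, a) - grad_y G (x, b)) (a - b).
Proof.
move=> da db mu0 hc.
have h1 := sc_half da mu0 (hc a b).
have h2 := sc_half db mu0 (hc b a).
rewrite (enormB_sym b a) in h2.
rewrite dotvBl.
have e1 : dotv (grad_y G (x, a)) (a - b) = - dotv (grad_y G (x, a)) (b - a).
  by rewrite -(opprB b a) -scaleN1r dotvZr mulN1r.
rewrite e1; lra.
Qed.

Lemma le0_small (A C : R) : (forall s, 0 < s -> A <= s * C) -> A <= 0.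
Proof.
move=> h; apply: le_eps => e e0; rewrite add0r.
have s0 : 0 < e / (`|C| + 1) by rewrite divr_gt0 // ltr_wpDl.
apply: le_trans (h _ s0) _.
have hC : C <= `|C| by exact: ler_norm.
have c1 : 0 < `|C| + 1 by rewrite ltr_wpDl.
have h5 : e / (`|C| + 1) * C <= e / (`|C| + 1) * (`|C| + 1).
  by rewrite ler_wpM2l ?ltW //; lra.
by rewrite mulfVK ?gt_eqF // in h5.
Qed.

Lemma grad_zero G x ys mu L :
  (forall y, differentiable G (x, y)) -> 0 <= mu -> HC G x mu ->
  (forall y, G (x, ys) <= G (x, y)) ->
  (forall y1 y2, enorm (grad_y G (x, y1) - grad_y G (x, y2)) <= L * enorm (y1 - y2)) ->
  grad_y G (x, ys) = 0.
Proof.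
move=> dG mu0 hc hmin hL.
set g0 := grad_y G (x, ys).
suff : dotv g0 g0 <= 0.
  move=> h; apply: enorm_eq0.
  have h0 : dotv g0 g0 = 0 by apply/eqP; rewrite eq_le h dotvv_ge0.
  by rewrite /enorm h0 sqrtr0.
apply: (@le0_small _ (L * enorm g0 ^+ 2)) => s s0.
set a := ys - s *: g0.
have h1 := sc_half (dG a) mu0 (hc a ys).
have hm := hmin a.
have N0 : 0 <= mu / 2 * enorm (a - ys) ^+ 2 by rewrite mulr_ge0 ?divr_ge0 ?sqr_ge0.
have e1 : ys - a = s *: g0 by rewrite /a opprB addrC subrK.
have e2 : a - ys = - (s *: g0) by rewrite -e1 opprB.
rewrite e1 dotvZr in h1.
have h2 : dotv (grad_y G (x, a)) g0 <= 0.
  have : s * dotv (grad_y G (x, a)) g0 <= 0 by lra.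
  by rewrite pmulr_rle0.
have h3 : dotv g0 g0 = dotv (grad_y G (x, a)) g0 - dotv (grad_y G (x, a) - g0) g0.
  by rewrite dotvBl; lra.
have h4 : - dotv (grad_y G (x, a) - g0) g0 <= L * (s * enorm g0) * enorm g0.
  rewrite -dotvNl; apply: le_trans (CS _ _) _.
  rewrite enormN; apply: ler_wpM2r; first exact: enorm_ge0.
  apply: le_trans (hL a ys) _.
  by rewrite e2 enormN enormZ gtr0_norm.
rewrite h3; lra.
Qed.

Lemma lip_alg (N d C mu : R) : 0 <= N -> 0 <= d -> 0 <= C -> 0 < mu ->
  mu * N ^+ 2 <= C * d * N -> N ^+ 2 <= (C / mu) ^+ 2 * d ^+ 2.
Proof.
move=> N0 d0 C0 mu0 h.
have hN : N <= C / mu * d.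
  have [->|Np] := eqVneq N 0; first by rewrite mulr_ge0 ?divr_ge0 // ltW.
  have Npos : 0 < N by rewrite lt_def Np N0.
  have h' : mu * N <= C * d.
    have : (mu * N) * N <= (C * d) * N by rewrite -mulrA -expr2.
    by rewrite ler_pM2r.
  by rewrite mulrAC ler_pdivlMr // mulrC.
rewrite -exprMn; apply: lerXn2r => //; rewrite nnegrE //.
by rewrite mulr_ge0 ?divr_ge0 // ltW.
Qed.

End SC3.

Section HB.
Variable R : realType.
Variables m n : nat.
Local Notation V := ('rV[R]_m * 'rV[R]_n)%type.

Lemma dot_mul_expand p q (u : 'rV[R]_p) (A : 'M[R]_(p, q)) w :
  dotv (u *m A) w = \sum_(j < q) \sum_(i < p) (u 0 i * w 0 j) * A i j.
Proof.
rewrite /dotv; apply: eq_bigr => j _; rewrite mxE mulr_suml.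
by apply: eq_bigr => i _; rewrite mulrAC.
Qed.

Variable d : measure_display.
Variable T : measurableType d.
Variable P : probability T R.

Lemma Int_abs (f : T -> R) : Int P f -> Int P (fun x => `|f x|).
Proof. by move=> h; exact: (integrable_abse h). Qed.

Lemma hess_bound (G : V -> R) (gf : T -> V -> R) (p : V) (u : 'rV[R]_m)
    (w : 'rV[R]_n) (C : R) :
  (forall i j, Int P (fun xi => derive (fun q => derive (gf xi) q (@ey_dir R m n j)) p (@ex_dir R m n i))) ->
  (forall i j, derive (fun q => derive G q (@ey_dir R m n j)) p (@ex_dir R m n i) =
      Ex P (fun xi => derive (fun q => derive (gf xi) q (@ey_dir R m n j)) p (@ex_dir R m n i))) ->
  (\int[P]_xi (opnorm (hess_xy (gf xi) p))%:E <= C%:E)%E ->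
  dotv (u *m hess_xy G p) w <= C * enorm u * enorm w.
Proof.
move=> hI hE hC.
pose h xi := dotv (u *m hess_xy (gf xi) p) w.
have hIh : Int P h.
  rewrite /h; under eq_fun do rewrite dot_mul_expand.
  apply: Int_sum => j; apply: Int_sum => i; apply: IntZ.
  by under eq_fun do rewrite mxE; exact: hI.
have E : dotv (u *m hess_xy G p) w = Ex P h.
  rewrite /h; under [in RHS]eq_fun do rewrite dot_mul_expand.
  rewrite dot_mul_expand Ex_sum; last first.
    by move=> j; apply: Int_sum => i; apply: IntZ; under eq_fun do rewrite mxE; exact: hI.
  apply: eq_bigr => j _; rewrite Ex_sum; last first.
    by move=> i; apply: IntZ; under eq_fun do rewrite mxE; exact: hI.
  apply: eq_bigr => i _; rewrite ExZ; last by under eq_fun do rewrite mxE; exact: hI.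
  by rewrite mxE hE; congr (_ * Ex P _); apply/funext => xi; rewrite mxE.
have pw xi : `|h xi| <= opnorm (hess_xy (gf xi) p) * (enorm u * enorm w).
  apply: le_trans (CSabs _ _) _.
  rewrite mulrA; apply: ler_wpM2r; first exact: enorm_ge0.
  exact: opnorm_mul.
have C0 : 0 <= C.
  rewrite -lee_fin; apply: le_trans hC; apply: integral_ge0 => xi _.
  by rewrite lee_fin opnorm_ge0.
rewrite E -mulrA; apply: le_trans (_ : Ex P h <= Ex P (fun xi => `|h xi|)) _.
  by apply: Ex_le => //; [exact: Int_abs | move=> xi; exact: ler_norm].
set k := enorm u * enorm w.
have k0 : 0 <= k by rewrite mulr_ge0 // enorm_ge0.
have [k00|kp] := eqVneq k 0.
  have -> : (fun xi => `|h xi|) = (fun _ => 0).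
    apply/funext => xi; apply/eqP; rewrite eq_le normr_ge0 andbT.
    by have := pw xi; rewrite -/k k00 mulr0.
  by rewrite Excst k00 mulr0.
have kpos : 0 < k by rewrite lt_def kp k0.
have hh : Ex P (fun xi => k^-1 * `|h xi|) <= C.
  rewrite -lee_fin -Ex_int; last by apply: IntZ; exact: Int_abs.
  apply: le_trans hC; apply: int_mono_ge0 => xi.
    by rewrite lee_fin mulr_ge0 ?invr_ge0 ?normr_ge0 // ltW.
  rewrite lee_fin mulrC ler_pdivrMr //; exact: pw.
rewrite ExZ in hh; last exact: Int_abs.
by move: hh; rewrite mulrC ler_pdivrMr.
Qed.

End HB.

Unset Implicit Arguments. Set Strict Implicit.

Theorem lemma1 (R : realType) (m n : nat)
  (X : set 'rV[R]_m) (D : R)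
  (dth dxi : measure_display) (Tth : measurableType dth) (Txi : measurableType dxi)
  (Pth : probability Tth R) (Pxi : probability Txi R)
  (f : 'rV[R]_m -> 'rV[R]_n -> Tth -> R) (g : 'rV[R]_m -> 'rV[R]_n -> Txi -> R)
  (sigx sigy sigxy sigg Lfx Lfy Lg Lgxy Lgyy Cy Cxy mug : R)
  (ystar : 'rV[R]_m -> 'rV[R]_n)
  (* ---------- setting ---------- *)
  (hXne : X !=set0) (hXconv : convex_setv X) (hXcomp : compact X)
  (hD : is_diameter X D)
  (hf_int : forall x y, Pth.-integrable setT (fun th => (f x y th)%:E))
  (hg_int : forall x y, Pxi.-integrable setT (fun xi => (g x y xi)%:E))
  (hf_diff : forall th p, differentiable (fun q : 'rV[R]_m * 'rV[R]_n => f q.1 q.2 th) p)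
  (hg_C2 : forall xi, C2 (fun q : 'rV[R]_m * 'rV[R]_n => g q.1 q.2 xi))
  (* derivatives of F are expectations of those of f *)
  (hF_der : forall p v,
     differentiable (fun q : 'rV[R]_m * 'rV[R]_n => Ex Pth (f q.1 q.2)) p /\
     Pth.-integrable setT
       (fun th => (derive (fun q : 'rV[R]_m * 'rV[R]_n => f q.1 q.2 th) p v)%:E) /\
     derive (fun q : 'rV[R]_m * 'rV[R]_n => Ex Pth (f q.1 q.2)) p v =
       Ex Pth (fun th => derive (fun q : 'rV[R]_m * 'rV[R]_n => f q.1 q.2 th) p v))
  (* derivatives (up to order 2) of G are expectations of those of g *)
  (hG_der1 : forall p v,
     differentiable (fun q : 'rV[R]_m * 'rV[R]_n => Ex Pxi (g q.1 q.2)) p /\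
     Pxi.-integrable setT
       (fun xi => (derive (fun q : 'rV[R]_m * 'rV[R]_n => g q.1 q.2 xi) p v)%:E) /\
     derive (fun q : 'rV[R]_m * 'rV[R]_n => Ex Pxi (g q.1 q.2)) p v =
       Ex Pxi (fun xi => derive (fun q : 'rV[R]_m * 'rV[R]_n => g q.1 q.2 xi) p v))
  (hG_der2 : forall p v w,
     differentiable (fun q' => derive (fun q : 'rV[R]_m * 'rV[R]_n => Ex Pxi (g q.1 q.2)) q' v) p /\
     Pxi.-integrable setT
       (fun xi => (derive (fun q' => derive (fun q : 'rV[R]_m * 'rV[R]_n => g q.1 q.2 xi) q' v) p w)%:E) /\
     derive (fun q' => derive (fun q : 'rV[R]_m * 'rV[R]_n => Ex Pxi (g q.1 q.2)) q' v) p w =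
       Ex Pxi (fun xi => derive (fun q' => derive (fun q : 'rV[R]_m * 'rV[R]_n => g q.1 q.2 xi) q' v) p w))
  (* ---------- Assumption 1 (i): variance bounds ---------- *)
  (hA1x : forall x y,
     (\int[Pth]_th ((enorm (grad_x (fun q => Ex Pth (f q.1 q.2)) (x, y)
                            - grad_x (fun q => f q.1 q.2 th) (x, y))) ^+ 2)%:E
      <= (sigx ^+ 2)%:E)%E)
  (hA1y : forall x y,
     (\int[Pth]_th ((enorm (grad_y (fun q => Ex Pth (f q.1 q.2)) (x, y)
                            - grad_y (fun q => f q.1 q.2 th) (x, y))) ^+ 2)%:E
      <= (sigy ^+ 2)%:E)%E)
  (hA1xy : forall x y,
     (\int[Pxi]_xi ((opnorm (hess_xy (fun q => Ex Pxi (g q.1 q.2)) (x, y)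
                             - hess_xy (fun q => g q.1 q.2 xi) (x, y))) ^+ 2)%:E
      <= (sigxy ^+ 2)%:E)%E)
  (hA1g : forall x y,
     (\int[Pxi]_xi ((enorm (grad_y (fun q => Ex Pxi (g q.1 q.2)) (x, y)
                            - grad_y (fun q => g q.1 q.2 xi) (x, y))) ^+ 2)%:E
      <= (sigg ^+ 2)%:E)%E)
  (* ---------- (ii): Lipschitz in y, for x in X ---------- *)
  (hA2fx : forall x y1 y2, X x ->
     enorm (grad_x (fun q => Ex Pth (f q.1 q.2)) (x, y1)
            - grad_x (fun q => Ex Pth (f q.1 q.2)) (x, y2)) <= Lfx * enorm (y1 - y2))
  (hA2fy : forall x y1 y2, X x ->
     enorm (grad_y (fun q => Ex Pth (f q.1 q.2)) (x, y1)
            - grad_y (fun q => Ex Pth (f q.1 q.2)) (x, y2)) <= Lfy * enorm (y1 - y2))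
  (hA2g : forall x y1 y2, X x ->
     enorm (grad_y (fun q => Ex Pxi (g q.1 q.2)) (x, y1)
            - grad_y (fun q => Ex Pxi (g q.1 q.2)) (x, y2)) <= Lg * enorm (y1 - y2))
  (hA2gxy : forall x y1 y2, X x ->
     opnorm (hess_xy (fun q => Ex Pxi (g q.1 q.2)) (x, y1)
             - hess_xy (fun q => Ex Pxi (g q.1 q.2)) (x, y2)) <= Lgxy * enorm (y1 - y2))
  (hA2gyy : forall x y1 y2, X x ->
     opnorm (hess_yy (fun q => Ex Pxi (g q.1 q.2)) (x, y1)
             - hess_yy (fun q => Ex Pxi (g q.1 q.2)) (x, y2)) <= Lgyy * enorm (y1 - y2))
  (* ---------- (iii): Lipschitz in x, for each y ---------- *)
  (hA3fy : forall y x1 x2,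
     enorm (grad_y (fun q => Ex Pth (f q.1 q.2)) (x1, y)
            - grad_y (fun q => Ex Pth (f q.1 q.2)) (x2, y)) <= Lfy * enorm (x1 - x2))
  (hA3gxy : forall y x1 x2,
     opnorm (hess_xy (fun q => Ex Pxi (g q.1 q.2)) (x1, y)
             - hess_xy (fun q => Ex Pxi (g q.1 q.2)) (x2, y)) <= Lgxy * enorm (x1 - x2))
  (hA3gyy : forall y x1 x2,
     opnorm (hess_yy (fun q => Ex Pxi (g q.1 q.2)) (x1, y)
             - hess_yy (fun q => Ex Pxi (g q.1 q.2)) (x2, y)) <= Lgyy * enorm (x1 - x2))
  (* ---------- (iv): bounded first moments ---------- *)
  (hA4y : forall x y, X x ->
     (\int[Pth]_th (enorm (grad_y (fun q => f q.1 q.2 th) (x, y)))%:E <= Cy%:E)%E)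
  (hA4xy : forall x y, X x ->
     (\int[Pxi]_xi (opnorm (hess_xy (fun q => g q.1 q.2 xi) (x, y)))%:E <= Cxy%:E)%E)
  (* ---------- (v): mu_g-strong convexity of G(x, .) on X ---------- *)
  (hmug : 0 < mug)
  (hA5 : forall x a b (l : R), X x -> 0 <= l <= 1 ->
     Ex Pxi (g x ((1 - l) *: a + l *: b))
       <= (1 - l) * Ex Pxi (g x a) + l * Ex Pxi (g x b)
          - mug / 2 * l * (1 - l) * enorm (a - b) ^+ 2)
  (* y*(x) = argmin_y G(x, y) *)
  (hystar : forall x y, X x -> Ex Pxi (g x (ystar x)) <= Ex Pxi (g x y))
  (* ---------- one SBFW step: iterate t-1 -> t (values fixed given F_t) ---------- *)
  (xp : 'rV[R]_m) (yp : 'rV[R]_n) (dp sp : 'rV[R]_m) (eta delta : R)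
  (hxp : X xp)
  (hsp : X sp /\ forall s, X s -> dotv sp dp <= dotv s dp)
  (heta : 0 <= eta <= 1)
  (hdelta0 : 0 < delta)
  (hdelta1 : 3 * mug * delta <= 2)
  (hdelta2 : 2 * (1 + sigg ^+ 2) * Lg ^+ 2 * delta <= mug) :
  let xt := (1 - eta) *: xp + eta *: sp in
  (\int[Pxi]_xi
     ((enorm (yp - delta *: grad_y (fun q => g q.1 q.2 xi) (xp, yp) - ystar xt)) ^+ 2)%:E
   <= ((1 - delta * mug / 2) * enorm (yp - ystar xp) ^+ 2
       + 2 * eta ^+ 2 / (delta * mug) * (Cxy / mug) ^+ 2 * D ^+ 2
       + 4 * delta ^+ 2 * sigg ^+ 2)%:E)%E.
Proof.
cbv zeta; set xt := (1 - eta) *: xp + eta *: sp.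
pose G := fun q : 'rV[R]_m * 'rV[R]_n => Ex Pxi (g q.1 q.2).
pose gf := fun xi => fun q : 'rV[R]_m * 'rV[R]_n => g q.1 q.2 xi.
have hxt : X xt by apply: hXconv => //; exact: hsp.1.
have dG : forall q, differentiable G q by move=> q; exact: (hG_der1 q 0).1.
have dD : forall q j, differentiable (fun q' => derive G q' (@ey_dir R m n j)) q.
  by move=> q j; exact: (hG_der2 q (ey_dir j) 0).1.
have mu0 : 0 <= mug by exact: ltW.
have hHC : forall x, X x -> HC G x mug.
  by move=> x hx a b l hl; exact: (hA5 x a b l hx hl).
have hz : forall x, X x -> grad_y G (x, ystar x) = 0.
  move=> x hx; apply: (@grad_zero _ _ _ G x (ystar x) mug Lg) => //.
  - exact: hHC.
  - by move=> y; exact: hystar.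
  - by move=> y1 y2; exact: hA2g.
have hmono : forall x a b, X x ->
    mug * enorm (a - b) ^+ 2 <= dotv (grad_y G (x, a) - grad_y G (x, b)) (a - b).
  by move=> x a b hx; apply: sc_mono => //; exact: hHC.
have Cxy0 : 0 <= Cxy.
  rewrite -lee_fin; apply: le_trans (hA4xy xp yp hxp); apply: integral_ge0 => xi _.
  by rewrite lee_fin opnorm_ge0.
have hhess : forall (x : 'rV[R]_m) (a : 'rV[R]_n) u w, X x ->
    dotv (u *m hess_xy G (x, a)) w <= Cxy * enorm u * enorm w.
  move=> x a u w hx.
  apply: (@hess_bound _ _ _ _ _ Pxi G gf (x, a) u w Cxy).
  - by move=> i j; exact: (hG_der2 (x, a) (ey_dir j) (ex_dir i)).2.1.
  - by move=> i j; exact: (hG_der2 (x, a) (ey_dir j) (ex_dir i)).2.2.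
  - exact: hA4xy.
have hgd : forall x x' a w, X x -> X x' ->
    dotv (grad_y G (x', a) - grad_y G (x, a)) w <= Cxy * enorm (x' - x) * enorm w.
  move=> x x' a w hx hx'; apply: grad_diff_bound; first exact: dD.
  move=> c /andP[c0 c1]; apply: hhess.
  have -> : x + c *: (x' - x) = (1 - c) *: x + c *: x'.
    by rewrite scalerBr scalerBl scale1r addrA addrAC.
  by apply: hXconv => //; rewrite ltW // ltW.
set ys := ystar xp.
set zs := ystar xt.
have hdx : enorm (xt - xp) <= eta * D.
  have -> : xt - xp = eta *: (sp - xp).
    by rewrite /xt scalerBl scale1r addrAC [X in X + _]addrAC subrr add0r addrC scalerBr.
  rewrite enormZ ger0_norm; last by case/andP: heta.
  apply: ler_wpM2l; first by case/andP: heta.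
  by apply: hD.1 => //; exact: hsp.1.
have hlip : enorm (ys - zs) ^+ 2 <= (Cxy / mug) ^+ 2 * enorm (xt - xp) ^+ 2.
  apply: lip_alg => //; [exact: enorm_ge0 | exact: enorm_ge0 |].
  apply: le_trans (hmono xt ys zs hxt) _.
  rewrite (hz xt hxt) subr0.
  have -> : grad_y G (xt, ys) = grad_y G (xt, ys) - grad_y G (xp, ys).
    by rewrite /ys (hz xp hxp) subr0.
  exact: hgd.
have hB : enorm (ys - zs) ^+ 2 <= (Cxy / mug) ^+ 2 * (eta ^+ 2 * D ^+ 2).
  apply: le_trans hlip _; apply: ler_wpM2l; first exact: sqr_ge0.
  rewrite -exprMn; apply: lerXn2r => //; rewrite ?nnegrE ?enorm_ge0 //.
  by apply: le_trans hdx; exact: enorm_ge0.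
set Gy := grad_y G (xp, yp).
pose gy := fun xi => grad_y (gf xi) (xp, yp).
pose e := fun xi => Gy - gy xi.
pose dj := fun (j : 'I_n) xi => derive (gf xi) (xp, yp) (@ey_dir R m n j).
have hdjI : forall j, Int Pxi (dj j).
  by move=> j; exact: (hG_der1 (xp, yp) (ey_dir j) ).2.1.
have hGyE : forall j, derive G (xp, yp) (@ey_dir R m n j) = Ex Pxi (dj j).
  by move=> j; exact: (hG_der1 (xp, yp) (ey_dir j)).2.2.
have heI : forall j, Int Pxi (fun xi => e xi 0 j).
  move=> j; rewrite /e; under eq_fun do rewrite !mxE.
  by apply: IntB; [exact: Intcst | exact: hdjI].
have heE : forall j, Ex Pxi (fun xi => e xi 0 j) = 0.
  move=> j; rewrite /e; under eq_fun do rewrite !mxE.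
  rewrite ExB; [|exact: Intcst| exact: hdjI].
  by rewrite Excst hGyE subrr.
set c := yp - delta *: Gy - ys.
pose f1 := fun xi => dotv c (e xi).
have hf1I : Int Pxi f1.
  by rewrite /f1 /dotv; apply: Int_sum => j; apply: IntZ; exact: heI.
have hf1E : Ex Pxi f1 = 0.
  rewrite /f1 /dotv Ex_sum; last by move=> j; apply: IntZ; exact: heI.
  by rewrite big1 // => j _; rewrite ExZ ?heE ?mulr0.
pose f2 := fun xi => enorm (e xi) ^+ 2.
have hf2m : measurable_fun setT f2.
  rewrite (_ : f2 = fun xi => \sum_(j < n) e xi 0 j * e xi 0 j); last first.
    by apply/funext => xi; rewrite /f2 enorm_sq.
  apply: measurable_sum => j; apply: measurable_realfun.measurable_funM;
    by apply/measurable_realfun.measurable_EFinP; exact: (measurable_int _ (heI j)).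
have hf2le : (\int[Pxi]_xi (f2 xi)%:E <= (sigg ^+ 2)%:E)%E by exact: hA1g.
have hf2I : Int Pxi f2.
  apply/integrableP; split; first exact/measurable_realfun.measurable_EFinP.
  under eq_integral do rewrite gee0_abs ?lee_fin ?sqr_ge0 //.
  by apply: le_lt_trans hf2le _; exact: ltry.
have hf2E : Ex Pxi f2 <= sigg ^+ 2 by rewrite -lee_fin -Ex_int.
have hf20 : 0 <= Ex Pxi f2.
  rewrite -lee_fin -Ex_int //; apply: integral_ge0 => xi _.
  by rewrite lee_fin sqr_ge0.
set bb := delta * mug / 2.
have bb0 : 0 < bb by rewrite /bb divr_gt0 // mulr_gt0.
have bb13 : bb <= 1 / 3 by rewrite /bb; lra.
have bb1 : 0 < 1 - bb by lra.
set sY := bb / (1 - bb).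
have sY0 : 0 < sY by rewrite /sY divr_gt0.
have k1E : 1 + sY = (1 - bb)^-1 by rewrite /sY; field; lra.
have k2E : 1 + sY^-1 = bb^-1 by rewrite /sY; field; rewrite ?gt_eqF //; lra.
pose Phi := fun xi => (1 + sY) * (enorm c ^+ 2 + (2 * delta) * f1 xi + delta ^+ 2 * f2 xi)
   + (1 + sY^-1) * enorm (ys - zs) ^+ 2.
have hpw : forall xi,
   enorm (yp - delta *: grad_y (fun q : 'rV[R]_m * 'rV[R]_n => g q.1 q.2 xi) (xp, yp) - zs) ^+ 2
   <= Phi xi.
  move=> xi.
  have -> : yp - delta *: grad_y (fun q : 'rV[R]_m * 'rV[R]_n => g q.1 q.2 xi) (xp, yp) - zs
      = (c + delta *: e xi) + (ys - zs).
    by apply/rowP => j; rewrite /c /e !mxE; ring.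
  apply: le_trans (young _ _ sY0) _.
  rewrite /Phi /f1 /f2; apply: lerD => //; apply: ler_wpM2l; first by lra.
  have expand : forall (u v : 'rV[R]_n) t,
      enorm (u + t *: v) ^+ 2 = enorm u ^+ 2 + 2 * t * dotv u v + t ^+ 2 * enorm v ^+ 2.
    move=> u v t; rewrite !enorm_sq dotvDl !dotvDr !dotvZl !dotvZr (dotvC v u).
    by rewrite expr2; ring.
  by rewrite expand.
pose A0 := (1 + sY) * enorm c ^+ 2 + (1 + sY^-1) * enorm (ys - zs) ^+ 2.
pose A1 := (1 + sY) * (2 * delta).
pose A2 := (1 + sY) * delta ^+ 2.
have PhiE : Phi = fun xi => A0 + (A1 * f1 xi + A2 * f2 xi).
  by apply/funext => xi; rewrite /Phi /A0 /A1 /A2; ring.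
have hPhiI : Int Pxi Phi.
  rewrite PhiE; apply: IntD; first exact: Intcst.
  by apply: IntD; apply: IntZ.
have hExPhi : Ex Pxi Phi = A0 + A2 * Ex Pxi f2.
  rewrite PhiE ExD; [|exact: Intcst|by apply: IntD; apply: IntZ].
  rewrite (ExD (IntZ A1 hf1I) (IntZ A2 hf2I)).
  by rewrite Excst (ExZ A1 hf1I) (ExZ A2 hf2I) hf1E mulr0 add0r.
apply: (@le_trans _ _ (Ex Pxi Phi)%:E).
  rewrite -Ex_int //; apply: int_mono_ge0 => xi; rewrite lee_fin ?sqr_ge0 //.
rewrite lee_fin hExPhi.
set r := enorm (yp - ys).
have r0 : 0 <= r by exact: enorm_ge0.
have hGyL : enorm Gy <= Lg * r.
  by have := hA2g xp yp ys hxp; rewrite (hz xp hxp) subr0.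
have hGy2 : enorm Gy ^+ 2 <= Lg ^+ 2 * r ^+ 2.
  rewrite -exprMn; apply: lerXn2r => //; rewrite ?nnegrE ?enorm_ge0 //.
  by apply: le_trans hGyL; exact: enorm_ge0.
have hmG : mug * r ^+ 2 <= dotv Gy (yp - ys).
  by have := hmono xp yp ys hxp; rewrite (hz xp hxp) subr0.
have expand2 : forall (u v : 'rV[R]_n) t,
    enorm (u + t *: v) ^+ 2 = enorm u ^+ 2 + 2 * t * dotv u v + t ^+ 2 * enorm v ^+ 2.
  move=> u v t; rewrite !enorm_sq dotvDl !dotvDr !dotvZl !dotvZr (dotvC v u).
  by rewrite expr2; ring.
have hc2 : enorm c ^+ 2 = r ^+ 2 - 2 * delta * dotv Gy (yp - ys) + delta ^+ 2 * enorm Gy ^+ 2.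
  have -> : c = (yp - ys) + (- delta) *: Gy by apply/rowP => j; rewrite /c !mxE; ring.
  by rewrite expand2 (dotvC (yp - ys)) /r; ring.
have hdL : delta * Lg ^+ 2 <= mug / 2.
  have : 0 <= sigg ^+ 2 * Lg ^+ 2 * delta.
    by apply: mulr_ge0; [apply: mulr_ge0; exact: sqr_ge0 | exact: ltW].
  lra.
have t1 : delta * (mug * r ^+ 2) <= delta * dotv Gy (yp - ys) by rewrite ler_wpM2l // ltW.
have t2 : delta ^+ 2 * enorm Gy ^+ 2 <= delta ^+ 2 * (Lg ^+ 2 * r ^+ 2).
  by rewrite ler_wpM2l // sqr_ge0.
have t3 : delta * (delta * Lg ^+ 2) * r ^+ 2 <= delta * (mug / 2) * r ^+ 2.
  by rewrite ler_wpM2r ?sqr_ge0 // ler_wpM2l // ltW.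
have hbb : bb = delta * mug / 2 by [].
have hc3 : enorm c ^+ 2 <= (1 - 3 * bb) * r ^+ 2.
  rewrite hc2 hbb.
  have e3 : delta ^+ 2 * (Lg ^+ 2 * r ^+ 2) = delta * (delta * Lg ^+ 2) * r ^+ 2 by ring.
  lra.
rewrite /A0 /A2 k1E k2E.
have ib : 0 < (1 - bb)^-1 by rewrite invr_gt0.
have t4 : (1 - bb)^-1 * enorm c ^+ 2 <= (1 - bb) * r ^+ 2.
  have q : (1 - 3 * bb) * r ^+ 2 <= (1 - bb) * (1 - bb) * r ^+ 2.
    by rewrite ler_wpM2r ?sqr_ge0 //; nra.
  apply: (@le_trans _ _ ((1 - bb)^-1 * ((1 - bb) * (1 - bb) * r ^+ 2))).
    by apply: ler_wpM2l; [exact: ltW | exact: le_trans hc3 q].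
  by rewrite -!mulrA mulKf ?gt_eqF.
have t5 : (1 - bb)^-1 * delta ^+ 2 * Ex Pxi f2 <= 4 * delta ^+ 2 * sigg ^+ 2.
  have i4 : (1 - bb)^-1 <= 4.
    by rewrite -[(1 - bb)^-1]mul1r ler_pdivrMr //; lra.
  rewrite -(mulrA (1 - bb)^-1) -(mulrA 4); apply: ler_pM.
  - exact: ltW.
  - by apply: mulr_ge0; [exact: sqr_ge0 | exact: hf20].
  - exact: i4.
  - by apply: ler_wpM2l; [exact: sqr_ge0 | exact: hf2E].
have t6 : bb^-1 * enorm (ys - zs) ^+ 2 <=
    2 * eta ^+ 2 / (delta * mug) * (Cxy / mug) ^+ 2 * D ^+ 2.
  have ib2 : 0 <= bb^-1 by rewrite invr_ge0 ltW.
  apply: le_trans (ler_wpM2l ib2 hB) _.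
  rewrite le_eqVlt; apply/orP; left; apply/eqP; rewrite hbb.
  by field; rewrite ?gt_eqF //.
lra.
Qed.
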